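(* Let $m\ge 4$ be an integer. If $H$ is a finite simple connected graph of order greater than $m$, then the Cartesian product $K_m \,\square\, H$ is not well-dominated.
   Context: A graph is well-dominated if every minimal (with respect to inclusion) dominating set is a minimum dominating set. The Cartesian product $G\,\square\, H$ has vertex set $V(G)\times V(H)$, with $(g_1,h_1)$ adjacent to $(g_2,h_2)$ iff either ($g_1=g_2$ and $h_1h_2\in E(H)$) or ($h_1=h_2$ and $g_1g_2\in E(G)$). *)

(* Defs.v *)
From mathcomp Require Import all_boot.
Set Implicit Arguments. Unset Strict Implicit. Unset Printing Implicit Defensive.

Definition simple_graph (T : finType) (e : rel T) : Prop :=
  symmetric e /\ irreflexive e.

Definition connected_graph (T : finType) (e : rel T) : Prop :=
  forall x y : T, connect e x y.

Definition complete_rel (m : nat) : rel 'I_m := fun i j => i != j.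

Definition cartesian_rel (A B : finType) (eA : rel A) (eB : rel B) : rel (A * B) :=
  fun u v => ((u.1 == v.1) && eB u.2 v.2) || ((u.2 == v.2) && eA u.1 v.1).

Definition dominating (T : finType) (e : rel T) (D : {set T}) : Prop :=
  forall x : T, x \in D \/ exists2 y, y \in D & e x y.

Definition minimal_dominating (T : finType) (e : rel T) (D : {set T}) : Prop :=
  dominating e D /\ forall D' : {set T}, D' \proper D -> ~ dominating e D'.

Definition minimum_dominating (T : finType) (e : rel T) (D : {set T}) : Prop :=
  dominating e D /\ forall D' : {set T}, dominating e D' -> #|D| <= #|D'|.

Definition well_dominated (T : finType) (e : rel T) : Prop :=
  forall D : {set T}, minimal_dominating e D -> minimum_dominating e D.

(* Main.v *)
Require Import Defs.
From mathcomp Require Import all_boot.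
From mathcomp Require Import zify.
Set Implicit Arguments. Unset Strict Implicit. Unset Printing Implicit Defensive.

Lemma min_priv (U : finType) (r : rel U) (D : {set U}) :
  dominating r D ->
  (forall p, p \in D -> exists q, (q \in D -> q = p) /\ (forall y, y \in D -> r q y -> y = p)) ->
  minimal_dominating r D.
Proof.
move=> domD hp; split=> // D' /properP [sub [p pD pnD']] domD'.
have [q [h1 h2]] := hp p pD.
case: (domD' q) => [qD' | [y yD' rqy]].
  by move: pnD'; rewrite -(h1 (subsetP sub _ qD')) qD'.
by move: pnD'; rewrite -(h2 y (subsetP sub _ yD') rqy) yD'.
Qed.

Lemma arithA (n PP a b : nat) : a <= n -> b <= n -> n.+1 + PP + a <= PP + b -> False.
Proof. lia. Qed.
Lemma arithB (a b c d : nat) : a <= b -> a = true + c -> b <= c -> False.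
Proof. rewrite /nat_of_bool; lia. Qed.

Lemma arithC n : 0 < n -> n = n.-1 -> False.
Proof. lia. Qed.
Lemma arithD n : 0 < n -> n <= n.-1 -> False.
Proof. lia. Qed.

Lemma arithE n : 0 < n -> 2 * n <= n.-1 + n.-1 -> False.
Proof. lia. Qed.

Section Prod.
Variables (m : nat) (T : finType) (e : rel T).
Hypothesis esym : symmetric e.
Hypothesis eirr : irreflexive e.
Variables (c0 c1 : 'I_m).
Hypothesis c01 : c0 != c1.

Definition G := cartesian_rel (@complete_rel m) e.

Lemma GE p q : G p q = ((p.1 == q.1) && e p.2 q.2) || ((p.2 == q.2) && (p.1 != q.1)).
Proof. by []. Qed.

Fact NC_key : unit. Proof. by []. Qed.
Definition NC x : {set T} := locked_with NC_key [set z | (z == x) || e x z].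
Lemma inNC x z : (z \in NC x) = (z == x) || e x z.
Proof. by rewrite /NC locked_withE inE. Qed.
Fact NS_key : unit. Proof. by []. Qed.
Definition NS (S : {set T}) : {set T} := locked_with NS_key [set z | [exists s in S, z \in NC s]].
Lemma inNS S z : (z \in NS S) = [exists s in S, z \in NC s].
Proof. by rewrite /NS locked_withE inE. Qed.

Lemma NCx x : x \in NC x.
Proof. by rewrite inNC eqxx. Qed.

Lemma NS_S (S : {set T}) s : s \in S -> s \in NS S.
Proof. by move=> sS; rewrite inNS; apply/existsP; exists s; rewrite sS NCx. Qed.

Definition DS (S : {set T}) := setX [set: 'I_m] S :|: setX [set c0] (~: NS S).

Lemma dom_DS S : dominating G (DS S).
Proof.
move=> [j h].
have [hS|hnS] := boolP (h \in S).
  by left; rewrite !inE hS.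
have [hN|hnN] := boolP (h \in NS S).
  move: hN; rewrite inNS => /existsP [s /andP [sS]]; rewrite inNC => /orP [/eqP hs|ehs].
    by move: hnS; rewrite hs sS.
  by right; exists (j, s); [rewrite !inE sS | rewrite GE /= eqxx esym ehs].
have [jc|jc] := eqVneq j c0.
  by left; rewrite !inE jc eqxx hnN orbT.
by right; exists (c0, h); [rewrite !inE eqxx hnN orbT | rewrite GE /= eqxx jc orbT].
Qed.

Lemma card_DS S : #|DS S| = m * #|S| + (#|T| - #|NS S|).
Proof.
rewrite cardsU.
have -> : setX [set: 'I_m] S :&: setX [set c0] (~: NS S) = set0.
  apply/setP=> [[j h]]; rewrite !inE /=.
  by case hS: (h \in S); rewrite //= (NS_S hS) andbF.
rewrite cards0 subn0 !cardsX cardsT card_ord cards1 mul1n.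
by have := cardsC (NS S); lia.
Qed.

Lemma NS_nb (S : {set T}) s y : s \in S -> e s y -> y \in NS S.
Proof. by move=> sS esy; rewrite inNS; apply/existsP; exists s; rewrite sS inNC esy orbT. Qed.

Definition strong_priv (S : {set T}) s := exists y,
  [/\ y \notin S, e s y, (forall s', s' \in S -> e y s' -> s' = s) & (forall z, e y z -> z \in NS S)].

Lemma min_DS (S : {set T}) : (forall s, s \in S -> strong_priv S s) -> minimal_dominating G (DS S).
Proof.
move=> hS; apply: min_priv; first exact: dom_DS.
move=> [j h]; rewrite !inE /= => /orP [hin | /andP [/eqP jc hN]].
  have [y [ynS ehy uniq clo]] := hS h hin.
  have yN : y \in NS S by apply: (NS_nb hin ehy).
  exists (j, y); split.
    by rewrite !inE /= (negbTE ynS) yN andbF.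
  move=> [k z]; rewrite !inE GE /= => /orP [zS | /andP [_ zN]].
    case/orP => [/andP [/eqP jk eyz] | /andP [/eqP yz _]].
      by rewrite -jk (uniq z zS eyz).
    by move: ynS; rewrite yz zS.
  case/orP => [/andP [_ eyz] | /andP [/eqP yz _]].
    by move: zN; rewrite (clo z eyz).
  by move: zN; rewrite -yz yN.
exists (c1, h); split.
  rewrite !inE /= eq_sym (negbTE c01) andFb orbF => hS'.
  by move: hN; rewrite (NS_S hS').
move=> [k z]; rewrite !inE GE /= => /orP [zS | /andP [/eqP kc zN]].
  case/orP => [/andP [_ ehz] | /andP [/eqP hz _]].
    by move: hN; rewrite (NS_nb zS (etrans (esym _ _) ehz)).
  by move: hN; rewrite hz (NS_S zS).
case/orP => [/andP [/eqP ck _] | /andP [/eqP hz _]].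
  by move: c01; rewrite ck kc eqxx.
by rewrite kc jc hz.
Qed.


Lemma NS0 : NS set0 = set0.
Proof. by apply/setP=> z; rewrite inNS inE; apply/existsP => [[s]]; rewrite inE. Qed.

Section WD.
Hypothesis hwd : well_dominated G.

Lemma wd_lb D : dominating G D -> #|T| <= #|D|.
Proof.
move=> domD.
have [_ h] := hwd (@min_DS set0 ltac:(by move=> s; rewrite inE)).
by move: (h D domD); rewrite card_DS cards0 NS0 cards0 muln0 subn0.
Qed.

Lemma wd_ub D : minimal_dominating G D -> #|D| <= #|T|.
Proof.
move=> minD; have [_ h] := hwd minD.
by move: (h _ (dom_DS set0)); rewrite card_DS cards0 NS0 cards0 muln0 subn0.
Qed.

Lemma C1a (S : {set T}) : #|NS S| <= m * #|S|.
Proof. have := wd_lb (dom_DS S); rewrite card_DS; have := max_card (NS S); lia. Qed.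

Lemma C1b (S : {set T}) : (forall s, s \in S -> strong_priv S s) -> m * #|S| <= #|NS S|.
Proof. move=> h; have := wd_ub (min_DS h); rewrite card_DS; have := max_card (NS S); lia. Qed.

End WD.

Definition D2 x := setX [set~ c0] [set x] :|: setX [set c0] (~: NC x).

Lemma card_D2 x : #|D2 x| = m.-1 + (#|T| - #|NC x|).
Proof.
rewrite cardsU.
have -> : setX [set~ c0] [set x] :&: setX [set c0] (~: NC x) = set0.
  apply/setP=> [[j h]]; rewrite !inE /=.
  by apply/negbTE/negP => /and3P [/andP [jc _] /eqP jc' _]; move: jc; rewrite jc' eqxx.
rewrite cards0 subn0 !cardsX cardsC1 !cards1 card_ord muln1 mul1n.
by have := cardsC (NC x); lia.
Qed.

Lemma min_D2 x : (exists y, e x y) ->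
  (forall y, e x y -> exists2 z, e y z & z \notin NC x) -> minimal_dominating G (D2 x).
Proof.
move=> [y0 exy0] hno; apply: min_priv.
  move=> [j h].
  have [hx|hx] := eqVneq h x.
    have [jc|jc] := eqVneq j c0.
      right; exists (c1, x); first by rewrite !inE eq_sym c01 eqxx.
      by rewrite GE /= hx eqxx jc c01 orbT.
    by left; rewrite !inE jc hx eqxx.
  have [hN|hN] := boolP (h \in NC x).
    have exh : e x h by move: hN; rewrite inNC (negbTE hx).
    have [jc|jc] := eqVneq j c0.
      have [z ehz zN] := hno h exh.
      right; exists (c0, z); first by rewrite !inE eqxx zN orbT.
      by rewrite GE /= jc eqxx ehz.
    right; exists (j, x); first by rewrite !inE jc eqxx.
    by rewrite GE /= eqxx esym exh.
  have [jc|jc] := eqVneq j c0.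
    by left; rewrite !inE jc eqxx hN orbT.
  right; exists (c0, h); first by rewrite !inE eqxx hN orbT.
  by rewrite GE /= eqxx jc orbT.
have y0x : y0 != x by apply: contraTneq exy0 => ->; rewrite eirr.
have y0N : y0 \in NC x by rewrite inNC exy0 orbT.
move=> [j h]; rewrite !inE /= => /orP [/andP [jc /eqP hx] | /andP [/eqP jc hN]].
  exists (j, y0); split.
    by rewrite !inE /= (negbTE y0x) y0N (negbTE jc) andbF.
  move=> [k z]; rewrite !inE GE /= => /orP [/andP [kc /eqP zx] | /andP [/eqP kc zN]].
    by case/orP => [/andP [/eqP jk _] | /andP [/eqP yz _]]; [rewrite hx zx jk | move: y0x; rewrite yz zx eqxx].
  case/orP => [/andP [/eqP jk _] | /andP [/eqP yz _]].
    by move: jc; rewrite jk kc eqxx.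
  by move: zN; rewrite -yz y0N.
exists (c1, h); split.
  rewrite !inE /= eq_sym (negbTE c01) andFb orbF => /andP [_ /eqP hx].
  by move: hN; rewrite hx NCx.
move=> [k z]; rewrite !inE GE /= => /orP [/andP [kc /eqP zx] | /andP [/eqP kc zN]].
  case/orP => [/andP [_ ehz] | /andP [/eqP hz _]].
    by move: hN; rewrite inNC -zx esym ehz orbT.
  by move: hN; rewrite hz zx NCx.
case/orP => [/andP [/eqP ck _] | /andP [/eqP hz _]].
  by move: c01; rewrite ck kc eqxx.
by rewrite kc jc hz.
Qed.

Section X.
Variables (x : T) (own : 'I_m -> T).
Hypothesis hown : forall j, e x (own j).
Hypothesis hsurj : forall y, e x y -> exists2 j, j != c0 & own j = y.

Definition D3 := [set (j, own j) | j : 'I_m] :|: setX [set c0] (~: NC x).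

Lemma ownN j : own j \in NC x.
Proof. by rewrite inNC hown orbT. Qed.

Lemma card_D3 : #|D3| = m + (#|T| - #|NC x|).
Proof.
rewrite cardsU.
have -> : [set (j, own j) | j : 'I_m] :&: setX [set c0] (~: NC x) = set0.
  apply/setP=> [[j h]]; rewrite !inE /=; apply/negbTE/negP => /andP [/imsetP [k _ [_ ->]]].
  by rewrite ownN andbF.
rewrite cards0 subn0 cardsX cards1 mul1n card_imset; last by move=> a b [].
by rewrite card_ord; have := cardsC (NC x); lia.
Qed.

Lemma min_D3 : (forall z, z \notin NC x -> exists2 y, e x y & ~~ e z y) ->
  minimal_dominating G D3.
Proof.
move=> hnd; apply: min_priv.
  move=> [j h].
  have [hx|hx] := eqVneq h x.
    right; exists (j, own j); first by rewrite !inE; apply/orP; left; apply/imsetP; exists j.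
    by rewrite GE /= eqxx hx hown.
  have [hN|hN] := boolP (h \in NC x).
    have exh : e x h by move: hN; rewrite inNC (negbTE hx).
    have [k _ okh] := hsurj exh.
    have kD : (k, h) \in D3 by rewrite !inE; apply/orP; left; apply/imsetP; exists k; rewrite ?okh.
    have [jk|jk] := eqVneq j k; first by left; rewrite jk.
    by right; exists (k, h); rewrite // GE /= eqxx jk orbT.
  have [jc|jc] := eqVneq j c0.
    by left; rewrite !inE jc eqxx hN orbT.
  right; exists (c0, h); first by rewrite !inE eqxx hN orbT.
  by rewrite GE /= eqxx jc orbT.
have xnN : forall j, x != own j by move=> j; apply: contraTneq (hown j) => <-; rewrite eirr.
move=> [j h]; rewrite !inE /= => /orP [/imsetP [k _ [-> ->]] | /andP [/eqP jc hN]].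
  exists (k, x); split.
    rewrite !inE /= NCx andbF orbF => /imsetP [i _ [_ xi]].
    by move: (xnN i); rewrite xi eqxx.
  move=> [i z]; rewrite !inE GE /= => /orP [/imsetP [l _ [-> ->]] | /andP [_ zN]].
    case/orP => [/andP [/eqP kl _] | /andP [/eqP xo _]]; first by rewrite kl.
    by move: (xnN l); rewrite xo eqxx.
  case/orP => [/andP [_ exz] | /andP [/eqP xz _]].
    by move: zN; rewrite inNC exz orbT.
  by move: zN; rewrite -xz NCx.
have [y exy nezy] := hnd _ hN.
have [k kc oky] := hsurj exy.
have hnx : h != x by apply: contraNneq hN => ->; rewrite NCx.
exists (k, h); split.
  rewrite !inE /= (negbTE kc) andFb orbF => /imsetP [i _ [_ hi]].
  by move: hN; rewrite hi ownN.
move=> [i z]; rewrite !inE GE /= => /orP [/imsetP [l _ [-> ->]] | /andP [/eqP ic zN]].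
  case/orP => [/andP [/eqP kl ehz] | /andP [/eqP ho _]].
    by move: nezy; rewrite -oky kl ehz.
  by move: hN; rewrite ho ownN.
case/orP => [/andP [/eqP ki _] | /andP [/eqP hz _]].
  by move: kc; rewrite ki ic eqxx.
by rewrite ic jc hz.
Qed.
End X.

Lemma own_exists x : nat_of_ord c0 = 0 -> 0 < #|[set y | e x y]| -> #|[set y | e x y]| < m ->
  exists own : 'I_m -> T, (forall j, e x (own j)) /\ (forall y, e x y -> exists2 j, j != c0 & own j = y).
Proof.
move=> c0v dpos dm.
set s := enum [set y | e x y].
have sd : size s = #|[set y | e x y]| by rewrite cardE.
exists (fun j : 'I_m => nth x s (j.-1 %% size s)); split.
  move=> j; have : nth x s (j.-1 %% size s) \in s by rewrite mem_nth // ltn_pmod // sd.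
  by rewrite mem_enum inE.
move=> y exy.
have ys : y \in s by rewrite mem_enum inE.
have ilt : index y s < size s by rewrite index_mem.
have jlt : (index y s).+1 < m by rewrite -sd in dm; lia.
exists (Ordinal jlt).
  by apply/eqP => /(congr1 (@nat_of_ord _)) /=; rewrite c0v.
by rewrite /= modn_small // nth_index.
Qed.

Definition iso (S : {set T}) := [set s in S | [forall t in S, ~~ e s t]].
Definition phi (S : {set T}) := #|S| * (#|T|).+1 + #|iso S|.

Lemma bc_exists : (forall x, exists y, e x y) ->
  exists S : {set T}, (forall x, x \in NS S) /\
    (forall s, s \in S -> exists y, [/\ y \notin S, e s y & forall s', s' \in S -> e y s' -> s' = s]).
Proof.
move=> hnb.
have domT : [forall x, x \in NS [set: T]] by apply/forallP => x; apply: NS_S; rewrite inE.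
case: (@arg_minnP _ [set: T] (fun S : {set T} => [forall x, x \in NS S]) phi domT) => S /forallP domS minS.
exists S; split => // s sS.
set P := [exists y, [&& y \notin S, e s y & [forall s', (s' \in S) ==> e y s' ==> (s' == s)]]].
have [/existsP [y /and3P [ynS esy /forallP hy]] | nP] := boolP P.
  by exists y; split=> // s' s'S eys'; apply/eqP; move: (hy s'); rewrite s'S eys'.
have notEP : forall y, y \notin S -> e s y -> exists2 s', s' \in S & e y s' && (s' != s).
  move=> y ynS esy; move: nP; rewrite negb_exists => /forallP /(_ y).
  rewrite ynS esy /= negb_forall => /existsP [s' ].
  by rewrite negb_imply => /andP [s'S]; rewrite negb_imply => /andP [eys' s's]; exists s'; rewrite ?eys'.
have phiS := minS.
have cardS : 0 < #|S| by apply/card_gt0P; exists s.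
have isoT : forall S', #|iso S'| <= #|T| by move=> S'; apply: max_card.
have [/existsP [t /andP [tS est]] | niso] := boolP [exists t in S, e s t].
  have domS' : [forall x, x \in NS (S :\ s)].
    apply/forallP => x; move: (domS x); rewrite !inNS => /existsP [r /andP [rS xr]].
    have [rs|rs] := eqVneq r s; last by apply/existsP; exists r; rewrite !inE rs rS.
    move: xr; rewrite inNC rs => /orP [/eqP xs | esx].
      apply/existsP; exists t; rewrite !inE tS inNC xs esym est orbT andbT.
      by rewrite andbT; apply: contraTneq est => ->; rewrite eirr.
    have [xS|xnS] := boolP (x \in S).
      apply/existsP; exists x; rewrite !inE xS NCx andbT.
      by rewrite andbT; apply: contraTneq esx => ->; rewrite eirr.
    have [s' s'S /andP [exs' s's]] := notEP x xnS esx.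
    by apply/existsP; exists s'; rewrite !inE s's s'S inNC esym exs' orbT.
  have := phiS _ domS'; rewrite /phi (cardsD1 s S) sS add1n mulSn.
  move: (#|S :\ s| * _) => PP.
  have := isoT (S :\ s); have := isoT S => h1 h2 h3; exfalso; exact: arithA h1 h2 h3.
(* case B: s isolated, swap with a neighbour *)
have [y esy] := hnb s.
have ynS : y \notin S by apply: contra niso => yS; apply/existsP; exists y; rewrite yS.
have [s' s'S /andP [eys' s's]] := notEP y ynS esy.
set S' := y |: (S :\ s).
have domS' : [forall x, x \in NS S'].
  apply/forallP => x; move: (domS x); rewrite !inNS => /existsP [r /andP [rS xr]].
  have [rs|rs] := eqVneq r s; last by apply/existsP; exists r; rewrite !inE rs rS orbT.
  move: xr; rewrite inNC rs => /orP [/eqP xs | esx].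
    by apply/existsP; exists y; rewrite !inE eqxx inNC xs esym esy orbT.
  have xnS : x \notin S by apply: contra niso => xS; apply/existsP; exists x; rewrite xS.
  have [s'' s''S /andP [exs'' s''s]] := notEP x xnS esx.
  by apply/existsP; exists s''; rewrite !inE s''s s''S inNC esym exs'' !orbT.
have cS' : #|S'| = #|S| by rewrite cardsU1 !inE negb_and ynS orbT add1n (cardsD1 s S) sS.
have niso' : forall t, t \in S -> ~~ e s t.
  by move=> t tS; apply: contra niso => est; apply/existsP; exists t; rewrite tS.
have isub : iso S' \subset iso S :\ s.
  apply/subsetP => a; rewrite !inE => /andP [aS' /forallP ha].
  have ay : a != y.
    apply/eqP => ay; move: (ha s'); rewrite ay eys' implybF !inE s's s'S orbT.
    done.
  move: aS'; rewrite (negbTE ay) /= => /andP [as_ aS]; rewrite as_ aS /=.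
  apply/forallP => t; apply/implyP => tS.
  have [ts|ts] := eqVneq t s; first by rewrite ts esym niso'.
  by move: (ha t); rewrite !inE ts tS orbT.
have sI : s \in iso S.
  by rewrite inE sS; apply/forallP => t; apply/implyP; apply: niso'.
have := subset_leq_card isub; have := cardsD1 s (iso S); rewrite sI /=.
have := phiS _ domS'; rewrite /phi cS' leq_add2l => h1 h2 h3; exfalso; exact: arithB h1 h2 h3.
Qed.

Lemma NCE x : NC x = x |: [set y | e x y].
Proof. by apply/setP => z; rewrite inNC !inE. Qed.

Lemma card_NC x : #|NC x| = #|[set y | e x y]|.+1.
Proof. by rewrite NCE cardsU1 inE eirr. Qed.

Lemma NS1 x : NS [set x] = NC x.
Proof.
apply/setP => z; rewrite inNS; apply/existsP/idP => [[s /andP [/set1P -> //]] | zx].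
by exists x; rewrite inE eqxx zx.
Qed.

Lemma NS2 a b : NS [set a; b] = NC a :|: NC b.
Proof.
apply/setP => z; rewrite inNS inE; apply/existsP/orP => [[s /andP [/set2P [->|->] h]]|[h|h]].
- by left. - by right. - by exists a; rewrite !inE eqxx h.
by exists b; rewrite !inE eqxx orbT h.
Qed.

Definition clb x := [exists c, e x c && [forall z, e c z ==> (z \in NC x)]].

Section Main.
Hypothesis hwd : well_dominated G.
Hypothesis c0v : nat_of_ord c0 = 0.

Lemma NCbound x : #|NC x| <= m.
Proof. by have := C1a hwd [set x]; rewrite NS1 cards1 muln1. Qed.

Lemma PAIR a b : a != b -> strong_priv [set a; b] a -> strong_priv [set a; b] b ->
  2 * m <= #|NC a :|: NC b|.
Proof.
move=> ab ha hb; have := C1b hwd (S := [set a; b]).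
rewrite NS2 cards2 ab mulnC; apply => s /set2P [->|->] //.
Qed.

Lemma V2c x : (exists y, e x y) -> ~~ clb x -> #|NC x| = m.-1.
Proof.
move=> hy ncl.
have hno : forall y, e x y -> exists2 z, e y z & z \notin NC x.
  move=> y exy; move: ncl; rewrite negb_exists => /forallP /(_ y); rewrite exy /= negb_forall.
  by move=> /existsP [z]; rewrite negb_imply => /andP [eyz zn]; exists z.
have hmin := min_D2 hy hno.
have := wd_ub hwd hmin; have := wd_lb hwd hmin.1; rewrite card_D2.
have := max_card (NC x); lia.
Qed.

Lemma Xc x : (exists y, e x y) -> (forall z, z \notin NC x -> exists2 y, e x y & ~~ e z y) ->
  m <= #|NC x|.
Proof.
move=> [y exy] hnd.
have hb := NCbound x; rewrite card_NC in hb.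
have hp : 0 < #|[set y | e x y]| by apply/card_gt0P; exists y; rewrite inE.
have [own [hown hsurj]] := own_exists c0v hp hb.
have := wd_ub hwd (min_D3 hown hsurj hnd); rewrite card_D3.
have := max_card (NC x); lia.
exact: hown.
Qed.

Lemma m_pos : 0 < m.
Proof. by apply: leq_ltn_trans (ltn_ord c0). Qed.

Lemma NCsym a b : (a \in NC b) = (b \in NC a).
Proof. by rewrite !inNC eq_sym esym. Qed.

Lemma sp_of_cl a b : clb a -> b \notin NC a -> strong_priv [set a; b] a.
Proof.
move=> /existsP [c /andP [eac /forallP hc]] bn.
have cN : forall z, e c z -> z \in NC a by move=> z ecz; move: (hc z); rewrite ecz.
exists c; split => //.
- rewrite !inE negb_or; apply/andP; split.
    by apply: contraTneq eac => ->; rewrite eirr.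
  by apply: contraNneq bn => <-; rewrite inNC eac orbT.
- move=> s' /set2P [->|-> ecb] //.
  by move: bn; rewrite (cN _ ecb).
- by move=> z ecz; rewrite NS2 inE (cN _ ecz).
Qed.

Lemma pairCl a b z : clb a -> clb b -> a \notin NC b -> z \in NC a -> z \in NC b -> False.
Proof.
move=> ca cb anb za zb.
have ab : a != b by apply: contraNneq anb => ->; rewrite NCx.
have bna : b \notin NC a by rewrite NCsym.
have hb := sp_of_cl cb anb.
have E : [set b; a] = [set a; b] by apply/setP => y; rewrite !inE orbC.
rewrite E in hb.
have := PAIR ab (sp_of_cl ca bna) hb; rewrite cardsU.
have : 0 < #|NC a :&: NC b| by apply/card_gt0P; exists z; rewrite inE za zb.
have := NCbound a; have := NCbound b; have := m_pos; lia.
Qed.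

Lemma side s t u v : (forall z, z \in NC s -> z \notin NC t) -> #|NC t| = m ->
  e s u -> e t v -> e u v ->
  #|NC u| = m.-1 /\ exists w, [/\ w != u, w != v, e v w, ~~ e w u & forall z, e w z -> e u z].
Proof.
move=> disj ct esu etv euv.
have mp := m_pos.
have clt : clb t.
  have [//|ncl] := boolP (clb t).
  by have := V2c (ex_intro _ v etv) ncl; rewrite ct => h; exfalso; apply: (arithC mp h).
have uS : u \in NC s by rewrite inNC esu orbT.
have vt : v \in NC t by rewrite inNC etv orbT.
have ncu : ~~ clb u.
  apply/negP => clu; apply: (pairCl clu clt (disj _ uS) _ vt).
  by rewrite inNC euv orbT.
have cu := V2c (ex_intro _ s (etrans (esym _ _) esu)) ncu.
set Q := [forall z, (z \notin NC u) ==> [exists y, e u y && ~~ e z y]].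
have [hQ|hQ] := boolP Q.
  exfalso; have := Xc (ex_intro _ s (etrans (esym _ _) esu)) _.
  rewrite cu; move=> h.
  have : m <= m.-1.
    apply: h => z zn; move: hQ => /forallP /(_ z); rewrite zn /= => /existsP [y /andP [h1 h2]].
    by exists y.
  by move/(arithD mp).
move: hQ; rewrite negb_forall => /existsP [w]; rewrite negb_imply => /andP [wn].
rewrite negb_exists => /forallP hw.
have hw' : forall y, e u y -> e w y.
  by move=> y euy; move: (hw y); rewrite euy /= negbK.
have wu : w != u by apply: contraNneq wn => ->; rewrite NCx.
have nuw : ~~ e u w by move: wn; rewrite inNC negb_or => /andP [_ ->].
have ews : e w s by apply: hw'; rewrite esym.
have wS : w \in NC s by rewrite inNC esym ews orbT.
have ewv : e w v := hw' _ euv.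
have ncw : ~~ clb w.
  apply/negP => clw; apply: (pairCl clw clt (disj _ wS) _ vt).
  by rewrite inNC ewv orbT.
have cw := V2c (ex_intro _ s ews) ncw.
have Eq : [set y | e u y] = [set y | e w y].
  apply/eqP; rewrite eqEcard; apply/andP; split.
    by apply/subsetP => y; rewrite !inE; apply: hw'.
  by move: cu cw; rewrite !card_NC => h1 h2; apply/eq_leq/succn_inj; rewrite h1 h2.
split => //; exists w; split => //.
- by apply: contraTneq ewv => ->; rewrite eirr.
- by rewrite esym.
- by rewrite esym.
- by move=> z ewz; move: (in_set (fun y => e w y) z); rewrite -Eq inE ewz.
Qed.

Lemma final s t u v : (forall z, z \in NC s -> z \notin NC t) -> #|NC s| = m -> #|NC t| = m ->
  e s u -> e t v -> e u v -> False.
Proof.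
move=> disj cs ct esu etv euv.
have disj' : forall z, z \in NC t -> z \notin NC s.
  by move=> z zt; apply: contraTN zt; apply: disj.
have [cu [w [wu wv evw nwu hw]]] := side disj ct esu etv euv.
have [cv [w' [w'v w'u euw' nw'v hw']]] := side disj' cs etv esu (etrans (esym _ _) euv).
have uv : u != v by apply: contraTneq euv => ->; rewrite eirr.
have spu : strong_priv [set u; v] u.
  exists w'; split => //.
  - by rewrite !inE negb_or w'u w'v.
  - by move=> s' /set2P [->|->] // ew'v; move: nw'v; rewrite ew'v.
  - by move=> z ew'z; rewrite NS2 !inE !inNC (hw' _ ew'z) !orbT.
have spv : strong_priv [set u; v] v.
  exists w; split => //.
  - by rewrite !inE negb_or wu wv.
  - by move=> s' /set2P [->|->] // ewu; move: nwu; rewrite ewu.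
  - by move=> z ewz; rewrite NS2 !inE !inNC (hw _ ewz) !orbT.
have := PAIR uv spu spv; have := leq_card_setU (NC u) (NC v); rewrite cu cv => h1 h2.
have := leq_trans h2 h1; exact: arithE m_pos.
Qed.

Lemma pcode S : (forall x, x \in NS S) ->
  (forall s, s \in S -> exists y, [/\ y \notin S, e s y & forall s', s' \in S -> e y s' -> s' = s]) ->
  (forall s, s \in S -> #|NC s| = m) /\
  (forall s t, s \in S -> t \in S -> s != t -> forall z, z \in NC s -> z \notin NC t).
Proof.
move=> domS ep.
have NST : #|NS S| = #|T| by rewrite -cardsT; apply: eq_card => z; rewrite domS inE.
have ha := C1a hwd S; rewrite NST in ha.
have hb : m * #|S| <= #|T|.
  rewrite -NST; apply: C1b => // s sS; have [y [ynS esy uy]] := ep s sS.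
  by exists y; split.
pose f z := odflt z [pick s in S | z \in NC s].
have hf : forall z, f z \in S /\ z \in NC (f z).
  move=> z; rewrite /f; case: pickP => [s /andP [sS zs] | none] //=.
  by move: (domS z); rewrite inNS => /existsP [s /andP [sS zs]]; move: (none s); rewrite sS zs.
pose pre s := [set z | f z == s].
have preN : forall s, pre s \subset NC s.
  by move=> s; apply/subsetP => z; rewrite inE => /eqP <-; case: (hf z).
have sum : #|T| = \sum_(s in S) #|pre s|.
  have -> : #|T| = \sum_(z : T) 1 by rewrite sum1_card.
  rewrite (partition_big f (fun s => s \in S)); last by move=> z _; case: (hf z).
  by apply: eq_bigr => s _; rewrite -sum1_card; apply: eq_bigl => z; rewrite inE.
have hle : forall s, s \in S -> #|pre s| <= m ?= iff (#|pre s| == m).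
  move=> s _; apply/leqif_eq; apply: leq_trans (subset_leq_card (preN s)) (NCbound s).
have := leqif_sum hle; rewrite sum_nat_const -sum.
move=> [_ hC].
have /forallP hall : [forall i in S, #|pre i| == m] by rewrite -hC mulnC eqn_leq ha hb.
have preE : forall s, s \in S -> pre s = NC s.
  move=> s sS; apply/eqP; rewrite eqEcard preN /=.
  by move: (hall s); rewrite sS /= => /eqP ->; apply: NCbound.
split.
  by move=> s sS; rewrite -(preE s sS); move: (hall s); rewrite sS => /eqP.
move=> s t sS tS st z zs; apply/negP => zt.
move: zs zt; rewrite -(preE s sS) -(preE t tS) !inE => /eqP -> /eqP ts.
by move: st; rewrite ts eqxx.
Qed.

Lemma cross (A : {set T}) x y : connect e x y -> x \in A -> y \notin A ->
  exists a b, [/\ a \in A, b \notin A & e a b].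
Proof.
move/connectP => [p pth ->]; elim: p x pth => [|z p IH] x /=; first by move=> _ xA; rewrite xA.
move=> /andP [exz pth] xA ynA; have [zA|znA] := boolP (z \in A); first exact: (IH z pth zA ynA).
by exists x, z.
Qed.

Lemma main_contra : m < #|T| -> connected_graph e -> False.
Proof.
move=> hT conn.
have hnb : forall x, exists y, e x y.
  move=> x; case: (pickP (fun z => z != x)) => [z zx | none].
    have [a [b [aA bA eab]]] := cross (conn x z) (set11 x) (ltac:(by rewrite inE zx)).
    by exists b; move: aA eab => /set1P ->.
  have : #|T| <= 1.
    rewrite -(cards1 x) -cardsT; apply: subset_leq_card; apply/subsetP => z _.
    by move: (none z) => /negbFE /eqP ->; rewrite set11.
  by have := m_pos; lia.
have [S [domS ep]] := bc_exists hnb.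
have [hc hd] := pcode domS ep.
have [x0 _] : exists x0 : T, true.
  by case: (pickP (fun _ : T => true)) => [z _|none]; [exists z | move: hT; rewrite (eq_card0 none)].
have [s sS] : exists2 s, s \in S & x0 \in NC s.
  by move: (domS x0); rewrite inNS => /existsP [s /andP [sS xs]]; exists s.
have [y yn] : exists y, y \notin NC s.
  case: (pickP (fun y => y \notin NC s)) => [y yn|none]; first by exists y.
  have : #|T| <= #|NC s|.
    rewrite -cardsT; apply: subset_leq_card; apply/subsetP => z _.
    by move: (none z) => /negbFE.
  by rewrite (hc s sS) leqNgt hT.
have [a [b [aN bN eab]]] := cross (conn s y) (NCx s) yn.
have [t tS bt] : exists2 t, t \in S & b \in NC t.
  by move: (domS b); rewrite inNS => /existsP [t /andP [tS bt]]; exists t.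
have st : s != t by apply: contraNneq bN => ->.
have disj := hd s t sS tS st.
have esa : e s a.
  move: aN; rewrite inNC => /orP [/eqP as_|] //.
  by move: bN; rewrite inNC -as_ eab orbT.
have etb : e t b.
  move: bt; rewrite inNC => /orP [/eqP bt|] //.
  by move: (disj _ aN); rewrite inNC -bt esym eab orbT.
by have := final disj (hc s sS) (hc t tS) esa etb eab.
Qed.
End Main.

End Prod.
Unset Implicit Arguments.

Theorem proposition24 (m : nat) (T : finType) (e : rel T) :
  4 <= m ->
  simple_graph e ->
  connected_graph e ->
  m < #|T| ->
  ~ well_dominated (cartesian_rel (@complete_rel m) e).
Proof.
move=> hm [esym eirr] conn hT hwd.
have m0 : 0 < m by lia.
have m1 : 1 < m by lia.
have c01 : Ordinal m0 != Ordinal m1 by [].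
exact: (@main_contra m T e esym eirr (Ordinal m0) (Ordinal m1) c01 hwd erefl hT conn).
Qed.
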